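(* Let $F$ be a field of characteristic different from $2$ and $3$ such that $F^2=F$. Let $K_{10}=F\cdot 1\oplus(K_3\otimes K_3)$ be the Kac Jordan superalgebra in the realization described in the context, let $W=(K_3)_{\bar 1}$ and let $V=W\otimes W\subseteq (K_{10})_{\bar 0}$ with the symmetric bilinear form $b(s\otimes t,u\otimes v)=(s|u)(t|v)$. Let $\Psi\colon \mathrm{Aut}(K_{10})\to O(V,b)$, $\varphi\mapsto\varphi|_V$. Then $\Psi$ is surjective and $\ker\Psi=\{\mathrm{id},\tau\}$, where $\tau$ is the grading automorphism, $\tau(z)=(-1)^{\bar z}z$ for homogeneous $z\in K_{10}$.
   Context: The Kaplansky superalgebra $K_3$ has even part $Fe$ and odd part $W=Fx+Fy$, with products $e^2=e$, $e x=xe=\tfrac12 x$, $e y=ye=\tfrac12 y$, $xy=e$, $yx=-e$, $x^2=y^2=0$. It carries the supersymmetric bilinear form with $(e|e)=\tfrac12$, $(x|y)=1$, $(y|x)=-1$, $(x|x)=(y|y)=0$, and even and odd parts orthogonal. $K_{10}=F\cdot 1\oplus(K_3\otimes K_3)$ is the superalgebra in which $1$ is an even identity element, $a\otimes b$ (for homogeneous $a,b\in K_3$) has parity $\bar a+\bar b$, and $(a\otimes b)(c\otimes d)=(-1)^{\bar b\bar c}\bigl(ac\otimes bd-\tfrac34(a|c)(b|d)1\bigr)$ for homogeneous $a,b,c,d\in K_3$; this is (isomorphic to) the $10$-dimensional Kac Jordan superalgebra. $\mathrm{Aut}(K_{10})$ denotes the group of automorphisms of graded algebras (grading-preserving algebra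 automorphisms); each such automorphism leaves $V$ invariant and restricts to an isometry of $(V,b)$, so $\Psi$ is a group homomorphism. $O(V,b)$ is the orthogonal group of $(V,b)$. *)

(* Defs.v *)
From mathcomp Require Import all_boot all_algebra.
Set Implicit Arguments. Unset Strict Implicit. Unset Printing Implicit Defensive.
Import GRing.Theory.
Local Open Scope ring_scope.

(* K_3 with basis indexed by 'I_3 : 0 = e (even), 1 = x (odd), 2 = y (odd). *)
Section Kac.
Variable F : fieldType.

Definition par (i : 'I_3) : bool := (i != 0 :> nat).

(* mK3 i k r = coefficient of basis vector r in the product b_i b_k of K_3 *)
Definition mK3 (i k r : 'I_3) : F :=
  match nat_of_ord i, nat_of_ord k, nat_of_ord r with
  | 0, 0, 0 => 1
  | 0, 1, 1 => 2^-1
  | 1, 0, 1 => 2^-1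
  | 0, 2, 2 => 2^-1
  | 2, 0, 2 => 2^-1
  | 1, 2, 0 => 1
  | 2, 1, 0 => -1
  | _, _, _ => 0
  end.

Definition fK3 (i k : 'I_3) : F :=
  match nat_of_ord i, nat_of_ord k with
  | 0, 0 => 2^-1
  | 1, 2 => 1
  | 2, 1 => -1
  | _, _ => 0
  end.

Definition sgn (j k : 'I_3) : F := if par j && par k then -1 else 1.

(* K_10 = F 1 (+) K_3 (x) K_3 ; an element is (scalar part, matrix of
   coefficients of b_i (x) b_j) *)
Record K10 := mkK10 { sc : F; tn : 'M[F]_3 }.

Definition addK (u v : K10) : K10 := mkK10 (sc u + sc v) (tn u + tn v).
Definition scaleK (c : F) (u : K10) : K10 := mkK10 (c * sc u) (c *: tn u).

(* (a 1 + sum A_ij b_i(x)b_j)(b 1 + sum B_kl b_k(x)b_l), using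
   (b_i(x)b_j)(b_k(x)b_l) = (-1)^{|j||k|} (b_i b_k (x) b_j b_l - 3/4 (b_i|b_k)(b_j|b_l) 1) *)
Definition mulK (u v : K10) : K10 :=
  mkK10
    (sc u * sc v - 3%:R / 4%:R *
       \sum_(i < 3) \sum_(j < 3) \sum_(k < 3) \sum_(l < 3)
          tn u i j * tn v k l * sgn j k * fK3 i k * fK3 j l)
    (\matrix_(r < 3, s < 3)
       (sc u * tn v r s + sc v * tn u r s +
        \sum_(i < 3) \sum_(j < 3) \sum_(k < 3) \sum_(l < 3)
          tn u i j * tn v k l * sgn j k * mK3 i k r * mK3 j l s)).

Definition evenK (u : K10) : Prop := forall i j, par i != par j -> tn u i j = 0.
Definition oddK (u : K10) : Prop := sc u = 0 /\ forall i j, par i = par j -> tn u i j = 0.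

Definition linK (f : K10 -> K10) : Prop :=
  forall c u v, f (addK (scaleK c u) v) = addK (scaleK c (f u)) (f v).

Definition is_autK (f : K10 -> K10) : Prop :=
  [/\ linK f, bijective f,
      (forall u v, f (mulK u v) = mulK (f u) (f v)),
      (forall u, evenK u -> evenK (f u)) &
      (forall u, oddK u -> oddK (f u))].

Definition tauK (u : K10) : K10 :=
  mkK10 (sc u) (\matrix_(i, j) (if par i != par j then - tn u i j else tn u i j)).

(* V = W (x) W ; coordinates of v in V : 2x2 matrix w.r.t. basis x,y of W *)
Definition embV (M : 'M[F]_2) : K10 :=
  mkK10 0 (\matrix_(i < 3, j < 3)
     match nat_of_ord i, nat_of_ord j with
     | 1, 1 => M 0 0 | 1, 2 => M 0 1 | 2, 1 => M 1 0 | 2, 2 => M 1 1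
     | _, _ => 0 end).

(* form (.|.) restricted to W, basis 0 = x, 1 = y *)
Definition fW (i k : 'I_2) : F :=
  match nat_of_ord i, nat_of_ord k with
  | 0, 1 => 1 | 1, 0 => -1 | _, _ => 0 end.

(* b(s(x)t, u(x)v) = (s|u)(t|v) *)
Definition bV (M N : 'M[F]_2) : F :=
  \sum_(i < 2) \sum_(j < 2) \sum_(k < 2) \sum_(l < 2) M i j * N k l * fW i k * fW j l.

Definition is_orthV (g : 'M[F]_2 -> 'M[F]_2) : Prop :=
  [/\ (forall c M N, g (c *: M + N) = c *: g M + g N), bijective g &
      forall M N, bV (g M) (g N) = bV M N].

End Kac.

(* Main.v *)
Require Import Defs.
From mathcomp Require Import all_boot all_algebra.
From mathcomp Require Import ring.
Import GRing.Theory.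
Local Open Scope ring_scope.
Set Implicit Arguments. Unset Strict Implicit. Unset Printing Implicit Defensive.


Section S.
Variable F : fieldType.

Definition i0 : 'I_3 := @Ordinal 3 0 isT.
Definition i1 : 'I_3 := @Ordinal 3 1 isT.
Definition i2 : 'I_3 := @Ordinal 3 2 isT.

Lemma sum3 (f : 'I_3 -> F) : \sum_(i < 3) f i = f i0 + f i1 + f i2.
Proof.
rewrite !big_ord_recr big_ord0 /= add0r.
by congr (f _ + f _ + f _); apply: val_inj.
Qed.

Lemma ord3P (P : 'I_3 -> Prop) : P i0 -> P i1 -> P i2 -> forall i, P i.
Proof.
move=> H0 H1 H2 [[|[|[|n]]] Hn] //.
- by rewrite (_ : Ordinal Hn = i0) //; apply: val_inj.
- by rewrite (_ : Ordinal Hn = i1) //; apply: val_inj.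
- by rewrite (_ : Ordinal Hn = i2) //; apply: val_inj.
Qed.
Definition mulE (u v : K10 F) (r s : 'I_3) : F :=
  sc u * tn v r s + sc v * tn u r s +
  match nat_of_ord r, nat_of_ord s with
  | 0, 0 => tn u i0 i0 * tn v i0 i0 * (1) * (1) * (1) + tn u i0 i1 * tn v i0 i2 * (1) * (1) * (1) + tn u i0 i2 * tn v i0 i1 * (1) * (1) * (-1) + tn u i1 i0 * tn v i2 i0 * (1) * (1) * (1) + tn u i1 i1 * tn v i2 i2 * (-1) * (1) * (1) + tn u i1 i2 * tn v i2 i1 * (-1) * (1) * (-1) + tn u i2 i0 * tn v i1 i0 * (1) * (-1) * (1) + tn u i2 i1 * tn v i1 i2 * (-1) * (-1) * (1) + tn u i2 i2 * tn v i1 i1 * (-1) * (-1) * (-1)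
  | 0, 1 => tn u i0 i0 * tn v i0 i1 * (1) * (1) * (2^-1) + tn u i0 i1 * tn v i0 i0 * (1) * (1) * (2^-1) + tn u i1 i0 * tn v i2 i1 * (1) * (1) * (2^-1) + tn u i1 i1 * tn v i2 i0 * (-1) * (1) * (2^-1) + tn u i2 i0 * tn v i1 i1 * (1) * (-1) * (2^-1) + tn u i2 i1 * tn v i1 i0 * (-1) * (-1) * (2^-1)
  | 0, 2 => tn u i0 i0 * tn v i0 i2 * (1) * (1) * (2^-1) + tn u i0 i2 * tn v i0 i0 * (1) * (1) * (2^-1) + tn u i1 i0 * tn v i2 i2 * (1) * (1) * (2^-1) + tn u i1 i2 * tn v i2 i0 * (-1) * (1) * (2^-1) + tn u i2 i0 * tn v i1 i2 * (1) * (-1) * (2^-1) + tn u i2 i2 * tn v i1 i0 * (-1) * (-1) * (2^-1)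
  | 1, 0 => tn u i0 i0 * tn v i1 i0 * (1) * (2^-1) * (1) + tn u i0 i1 * tn v i1 i2 * (-1) * (2^-1) * (1) + tn u i0 i2 * tn v i1 i1 * (-1) * (2^-1) * (-1) + tn u i1 i0 * tn v i0 i0 * (1) * (2^-1) * (1) + tn u i1 i1 * tn v i0 i2 * (1) * (2^-1) * (1) + tn u i1 i2 * tn v i0 i1 * (1) * (2^-1) * (-1)
  | 1, 1 => tn u i0 i0 * tn v i1 i1 * (1) * (2^-1) * (2^-1) + tn u i0 i1 * tn v i1 i0 * (-1) * (2^-1) * (2^-1) + tn u i1 i0 * tn v i0 i1 * (1) * (2^-1) * (2^-1) + tn u i1 i1 * tn v i0 i0 * (1) * (2^-1) * (2^-1)
  | 1, 2 => tn u i0 i0 * tn v i1 i2 * (1) * (2^-1) * (2^-1) + tn u i0 i2 * tn v i1 i0 * (-1) * (2^-1) * (2^-1) + tn u i1 i0 * tn v i0 i2 * (1) * (2^-1) * (2^-1) + tn u i1 i2 * tn v i0 i0 * (1) * (2^-1) * (2^-1)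
  | 2, 0 => tn u i0 i0 * tn v i2 i0 * (1) * (2^-1) * (1) + tn u i0 i1 * tn v i2 i2 * (-1) * (2^-1) * (1) + tn u i0 i2 * tn v i2 i1 * (-1) * (2^-1) * (-1) + tn u i2 i0 * tn v i0 i0 * (1) * (2^-1) * (1) + tn u i2 i1 * tn v i0 i2 * (1) * (2^-1) * (1) + tn u i2 i2 * tn v i0 i1 * (1) * (2^-1) * (-1)
  | 2, 1 => tn u i0 i0 * tn v i2 i1 * (1) * (2^-1) * (2^-1) + tn u i0 i1 * tn v i2 i0 * (-1) * (2^-1) * (2^-1) + tn u i2 i0 * tn v i0 i1 * (1) * (2^-1) * (2^-1) + tn u i2 i1 * tn v i0 i0 * (1) * (2^-1) * (2^-1)
  | 2, 2 => tn u i0 i0 * tn v i2 i2 * (1) * (2^-1) * (2^-1) + tn u i0 i2 * tn v i2 i0 * (-1) * (2^-1) * (2^-1) + tn u i2 i0 * tn v i0 i2 * (1) * (2^-1) * (2^-1) + tn u i2 i2 * tn v i0 i0 * (1) * (2^-1) * (2^-1)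
  | _, _ => 0
  end.
Definition scE (u v : K10 F) : F :=
  sc u * sc v - 3%:R / 4%:R * (tn u i0 i0 * tn v i0 i0 * (1) * (2^-1) * (2^-1) + tn u i0 i1 * tn v i0 i2 * (1) * (2^-1) * (1) + tn u i0 i2 * tn v i0 i1 * (1) * (2^-1) * (-1) + tn u i1 i0 * tn v i2 i0 * (1) * (1) * (2^-1) + tn u i1 i1 * tn v i2 i2 * (-1) * (1) * (1) + tn u i1 i2 * tn v i2 i1 * (-1) * (1) * (-1) + tn u i2 i0 * tn v i1 i0 * (1) * (-1) * (2^-1) + tn u i2 i1 * tn v i1 i2 * (-1) * (-1) * (1) + tn u i2 i2 * tn v i1 i1 * (-1) * (-1) * (-1)).

Lemma mulK_E (u v : K10 F) : mulK u v = mkK10 (scE u v) (\matrix_(r, s) mulE u v r s).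
Proof.
rewrite /mulK /scE; congr mkK10.
  by rewrite !sum3 /sgn /fK3 /=; ring.
apply/matrixP=> r s; rewrite !mxE.
move: r s; apply: ord3P; apply: ord3P;
  by rewrite /mulE !sum3 /sgn /mK3 /=; ring.
Qed.

Definition blk (A : 'M[F]_2) : 'M[F]_3 := \matrix_(i < 3, j < 3)
  match nat_of_ord i, nat_of_ord j with
  | 0, 0 => 1 | 1, 1 => A 0 0 | 1, 2 => A 0 1 | 2, 1 => A 1 0 | 2, 2 => A 1 1
  | _, _ => 0 end.

Definition mapE (A B : 'M[F]_2) (u : K10 F) (r s : 'I_3) : F :=
  match nat_of_ord r, nat_of_ord s with
  | 0, 0 => 1 * tn u i0 i0 * 1
  | 0, 1 => 1 * tn u i0 i1 * B 0 0 + 1 * tn u i0 i2 * B 0 1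
  | 0, 2 => 1 * tn u i0 i1 * B 1 0 + 1 * tn u i0 i2 * B 1 1
  | 1, 0 => A 0 0 * tn u i1 i0 * 1 + A 0 1 * tn u i2 i0 * 1
  | 1, 1 => A 0 0 * tn u i1 i1 * B 0 0 + A 0 0 * tn u i1 i2 * B 0 1 + A 0 1 * tn u i2 i1 * B 0 0 + A 0 1 * tn u i2 i2 * B 0 1
  | 1, 2 => A 0 0 * tn u i1 i1 * B 1 0 + A 0 0 * tn u i1 i2 * B 1 1 + A 0 1 * tn u i2 i1 * B 1 0 + A 0 1 * tn u i2 i2 * B 1 1
  | 2, 0 => A 1 0 * tn u i1 i0 * 1 + A 1 1 * tn u i2 i0 * 1
  | 2, 1 => A 1 0 * tn u i1 i1 * B 0 0 + A 1 0 * tn u i1 i2 * B 0 1 + A 1 1 * tn u i2 i1 * B 0 0 + A 1 1 * tn u i2 i2 * B 0 1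
  | 2, 2 => A 1 0 * tn u i1 i1 * B 1 0 + A 1 0 * tn u i1 i2 * B 1 1 + A 1 1 * tn u i2 i1 * B 1 0 + A 1 1 * tn u i2 i2 * B 1 1
  | _, _ => 0 end.

Definition mapK (A B : 'M[F]_2) (u : K10 F) : K10 F :=
  mkK10 (sc u) (\matrix_(r, s) mapE A B u r s).

Lemma K10_eq (u v : K10 F) : sc u = sc v -> tn u = tn v -> u = v.
Proof. by case: u v => a M [b N] /= -> ->. Qed.

Lemma det22 (A : 'M[F]_2) : \det A = A 0 0 * A 1 1 - A 0 1 * A 1 0.
Proof.
rewrite (expand_det_row _ 0) !big_ord_recr big_ord0 /= /cofactor !det_mx11 !mxE /=.
rewrite add0r.
have -> : lift 0 (0 : 'I_1) = 1 :> 'I_2 by apply: val_inj.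
have -> : (lift (widen_ord (leqnSn 1) ord_max) (0 : 'I_1)) = 1 :> 'I_2 by apply: val_inj.
have -> : (lift ord_max (0 : 'I_1)) = 0 :> 'I_2 by apply: val_inj.
have -> : (widen_ord (leqnSn 1) ord_max) = 0 :> 'I_2 by apply: val_inj.
have -> : (ord_max : 'I_2) = 1 by apply: val_inj.
rewrite /= expr0 expr1; ring.
Qed.

Lemma det1P (A : 'M[F]_2) : \det A = 1 ->
  (A 0 0 != 0 /\ A 1 1 = (1 + A 0 1 * A 1 0) / A 0 0) \/
  [/\ A 0 0 = 0, A 0 1 != 0 & A 1 0 = - (A 0 1)^-1].
Proof.
rewrite det22 => h.
have [a0|a0] := eqVneq (A 0 0) 0.
  right; have h' : A 0 1 * A 1 0 = -1 by rewrite -h a0; ring.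
  have a1 : A 0 1 != 0 by apply/eqP => e; move: h'; rewrite e mul0r => /eqP; rewrite eq_sym oppr_eq0 oner_eq0.
  split=> //; apply: (mulfI a1); rewrite h' mulrN divff //.
left; split=> //; rewrite -h; field; exact: a0.
Qed.

Lemma mapK_mul (A B : 'M[F]_2) (u v : K10 F) (h2 : (2%:R : F) != 0) :
  \det A = 1 -> \det B = 1 ->
  mapK A B (mulK u v) = mulK (mapK A B u) (mapK A B v).
Proof.
have h4 : (4%:R : F) != 0.
  by rewrite (_ : 4%:R = 2%:R * 2%:R :> F) ?mulf_neq0 // -natrM.
move=> /det1P dA /det1P dB.
rewrite !(mulK_E); apply: K10_eq => /=.
  rewrite /scE /= !mxE /mapE /=.
  case: dA => [[a0 eA]|[a0 a1 eA]]; case: dB => [[b0 eB]|[b0 b1 eB]]; rewrite ?eA ?eB ?a0 ?b0; field;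
   by rewrite ?a0 ?b0 ?a1 ?b1 ?h2 ?h4.
apply/matrixP; apply: ord3P; apply: ord3P; rewrite !mxE /mapE /= !mxE /mulE /= !mxE /mapE /=;
  case: dA => [[a0 eA]|[a0 a1 eA]]; case: dB => [[b0 eB]|[b0 b1 eB]]; rewrite ?eA ?eB ?a0 ?b0; field;
   by rewrite ?a0 ?b0 ?a1 ?b1 ?h2 ?h4.
Qed.
End S.


Arguments mapK {_}. Arguments blk {_}. Arguments mulE {_}. Arguments scE {_}.
Arguments sum3 {_}. Arguments K10_eq {_}. Arguments det22 {_}. Arguments det1P {_}.
Arguments mapK_mul {_}. Arguments mulK_E {_}.

Section S2.
Variable F : fieldType.
Hypothesis h2 : (2%:R : F) != 0.

Lemma sum2 (f : 'I_2 -> F) : \sum_(i < 2) f i = f 0 + f 1.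
Proof. by rewrite !big_ord_recr big_ord0 /= add0r; congr (f _ + f _); apply: val_inj. Qed.

Lemma ord2P (P : 'I_2 -> Prop) : P 0 -> P 1 -> forall i, P i.
Proof.
move=> H0 H1 [[|[|n]] Hn] //.
- by rewrite (_ : Ordinal Hn = 0) //; apply: val_inj.
- by rewrite (_ : Ordinal Hn = 1) //; apply: val_inj.
Qed.

Ltac ex := do 3 (rewrite ?sum3 ?sum2 ?mxE /=; rewrite /mapE /sgn /=).

Lemma mapK_lin (A B : 'M[F]_2) : linK (mapK A B).
Proof.
move=> c u v; apply: K10_eq => //=.
apply/matrixP; apply: ord3P; apply: ord3P; ex; ring.
Qed.

Lemma mapK_comp (A B A' B' : 'M[F]_2) u :
  mapK A B (mapK A' B' u) = mapK (A *m A') (B *m B') u.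
Proof.
apply: K10_eq => //=.
apply/matrixP; apply: ord3P; apply: ord3P; ex; ring.
Qed.

Lemma mapK1 (u : K10 F) : mapK 1 1 u = u.
Proof.
apply: K10_eq => //=.
apply/matrixP; apply: ord3P; apply: ord3P; ex; ring.
Qed.

Lemma mapK_even (A B : 'M[F]_2) (u : K10 F) : evenK u -> evenK (mapK A B u).
Proof.
move=> H; have z01 := H i0 i1 isT; have z02 := H i0 i2 isT.
have z10 := H i1 i0 isT; have z20 := H i2 i0 isT.
apply: ord3P; apply: ord3P => //= _;
  ex; rewrite ?z01 ?z02 ?z10 ?z20; ring.
Qed.

Lemma mapK_odd (A B : 'M[F]_2) (u : K10 F) : oddK u -> oddK (mapK A B u).
Proof.
move=> [H0 H]; split => //.
have z00 := H i0 i0 erefl; have z11 := H i1 i1 erefl; have z12 := H i1 i2 erefl.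
have z21 := H i2 i1 erefl; have z22 := H i2 i2 erefl.
apply: ord3P; apply: ord3P => //= _;
  ex; rewrite ?z00 ?z11 ?z12 ?z21 ?z22; ring.
Qed.

End S2.

Arguments mapK {_}. Arguments blk {_}. Arguments mulE {_}. Arguments scE {_}.
Arguments sum3 {_}. Arguments K10_eq {_}. Arguments det22 {_}. Arguments det1P {_}.
Arguments mapK_mul {_}. Arguments mulK_E {_}.

Section S3.
Variable F : fieldType.
Hypothesis h2 : (2%:R : F) != 0.


Ltac ex := do 3 (rewrite ?sum3 ?sum2 ?mxE /=; rewrite /mapE /sgn /=).

Lemma mapK_bij (A B : 'M[F]_2) : \det A = 1 -> \det B = 1 -> bijective (mapK A B).
Proof.
move=> dA dB; exists (mapK (\adj A) (\adj B)) => u.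
  by rewrite mapK_comp !mul_adj_mx dA dB mapK1.
by rewrite mapK_comp !mul_mx_adj dA dB mapK1.
Qed.

Lemma mapK_aut (A B : 'M[F]_2) : \det A = 1 -> \det B = 1 -> is_autK (mapK A B).
Proof.
move=> dA dB; split.
- exact: mapK_lin.
- exact: mapK_bij.
- by move=> u v; apply: mapK_mul.
- exact: mapK_even.
- exact: mapK_odd.
Qed.

Lemma aut_comp (f g : K10 F -> K10 F) : is_autK f -> is_autK g -> is_autK (f \o g).
Proof.
case=> lf bf mf ef of_ [] lg bg mg eg og; split.
- by move=> c u v /=; rewrite lg lf.
- exact: bij_comp.
- by move=> u v /=; rewrite mg mf.
- by move=> u /eg /ef.
- by move=> u /og /of_.
Qed.

Lemma aut_ext (f g : K10 F -> K10 F) : (forall u, f u = g u) -> is_autK f -> is_autK g.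
Proof.
move=> E [lf bf mf ef of_]; split.
- by move=> c u v; rewrite -!E lf.
- exact: (eq_bij bf E).
- by move=> u v; rewrite -!E mf.
- by move=> u; rewrite -E; apply: ef.
- by move=> u; rewrite -E; apply: of_.
Qed.

Lemma det_m1 : \det (-1 : 'M[F]_2) = 1.
Proof. rewrite det22 !mxE /=; ring. Qed.

Lemma tau_mapK (u : K10 F) : tauK u = mapK (-1) (-1) u.
Proof.
apply: K10_eq => //=; apply/matrixP; apply: ord3P; apply: ord3P; ex; ring.
Qed.

Lemma tau_aut : is_autK (@tauK F).
Proof.
apply: (@aut_ext (mapK (-1) (-1))) => [u|]; first by rewrite tau_mapK.
exact: mapK_aut det_m1 det_m1.
Qed.

Definition Sw (u : K10 F) : K10 F := mkK10 (sc u) (\matrix_(i, j) (@sgn F i j * tn u j i)).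

Lemma Sw_aut : is_autK Sw.
Proof.
split.
- move=> c u v; apply: K10_eq => //=; apply/matrixP; apply: ord3P; apply: ord3P; ex; ring.
- exists Sw => u; apply: K10_eq => //=; apply/matrixP; apply: ord3P; apply: ord3P;
    rewrite /sgn; ex; ring.
- move=> u v; rewrite !mulK_E; apply: K10_eq => /=.
    rewrite /scE /sgn; ex; ring.
  apply/matrixP; apply: ord3P; apply: ord3P; rewrite /mulE /sgn; ex; ring.
- move=> u H; apply: ord3P; apply: ord3P => //= _; rewrite /sgn; ex;
    rewrite ?(H i0 i1 isT) ?(H i0 i2 isT) ?(H i1 i0 isT) ?(H i2 i0 isT); ring.
- move=> u [H0 H]; split => //; apply: ord3P; apply: ord3P => //= _; rewrite /sgn; ex;
    rewrite ?(H i0 i0 erefl) ?(H i1 i1 erefl) ?(H i1 i2 erefl) ?(H i2 i1 erefl) ?(H i2 i2 erefl); ring.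
Qed.

Lemma mapK_embV (A B M : 'M[F]_2) : mapK A B (embV M) = embV (A *m M *m B^T).
Proof.
apply: K10_eq => //=; apply/matrixP; apply: ord3P; apply: ord3P; ex; ring.
Qed.

Lemma Sw_embV (M : 'M[F]_2) : Sw (embV M) = embV (- M^T).
Proof.
apply: K10_eq => //=; apply/matrixP; apply: ord3P; apply: ord3P; rewrite /sgn; ex; ring.
Qed.

Lemma tau_embV (M : 'M[F]_2) : tauK (embV M) = embV M.
Proof.
apply: K10_eq => //=; apply/matrixP; apply: ord3P; apply: ord3P; ex; ring.
Qed.

End S3.

Arguments det22 {_}.

Section S4.
Variable F : fieldType.
Hypothesis h2 : (2%:R : F) != 0.

Definition w (a b : F * F) : F := a.1 * b.2 - a.2 * b.1.
Definition mx2 (a p : F * F) : 'M[F]_2 := \matrix_(i, j)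
  ((match nat_of_ord i with 0 => a.1 | _ => a.2 end) *
   (match nat_of_ord j with 0 => p.1 | _ => p.2 end)).
Definition colmx (c0 c1 : F * F) : 'M[F]_2 := \matrix_(k, i)
  (match nat_of_ord i with
   | 0 => match nat_of_ord k with 0 => c0.1 | _ => c0.2 end
   | _ => match nat_of_ord k with 0 => c1.1 | _ => c1.2 end end).
Definition sc2 (l : F) (a : F * F) : F * F := (l * a.1, l * a.2).

Lemma bV_mx2 a p b q : bV (mx2 a p) (mx2 b q) = w a b * w p q.
Proof. rewrite /bV !sum2 /fW !mxE /=; rewrite /w; ring. Qed.

Lemma mx2_tr a p : (mx2 a p)^T = mx2 p a.
Proof. apply/matrixP; apply: ord2P; apply: ord2P; rewrite !mxE /=; ring. Qed.

Lemma mx2_scale k n a p : mx2 (sc2 k a) (sc2 n p) = (k * n) *: mx2 a p.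
Proof. apply/matrixP; apply: ord2P; apply: ord2P; rewrite !mxE /=; ring. Qed.

Lemma mx2_scale_l k a p : mx2 (sc2 k a) p = k *: mx2 a p.
Proof. apply/matrixP; apply: ord2P; apply: ord2P; rewrite !mxE /=; ring. Qed.

Lemma mx2_scale_r k a p : mx2 a (sc2 k p) = k *: mx2 a p.
Proof. apply/matrixP; apply: ord2P; apply: ord2P; rewrite !mxE /=; ring. Qed.

Lemma det_colmx u v : \det (colmx u v) = w u v.
Proof. rewrite det22 !mxE /= /w; ring. Qed.

Lemma rank1 (M : 'M[F]_2) : bV M M = 0 -> exists a p, M = mx2 a p.
Proof.
move=> H.
have d : M 0 0 * M 1 1 = M 0 1 * M 1 0.
  apply/eqP; rewrite -subr_eq0; apply/eqP; apply: (mulfI h2); rewrite mulr0 -H.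
  rewrite /bV !sum2 /fW /=; ring.
have [m0|m0] := eqVneq (M 0 0) 0.
  have [m1|m1] := eqVneq (M 0 1) 0.
    exists (0, 1), (M 1 0, M 1 1); apply/matrixP; apply: ord2P; apply: ord2P;
      rewrite !mxE /= ?m0 ?m1; ring.
  have m2 : M 1 0 = 0.
    by apply: (mulfI m1); rewrite mulr0 -d m0 mul0r.
  exists (M 0 1, M 1 1), (0, 1); apply/matrixP; apply: ord2P; apply: ord2P;
    rewrite !mxE /= ?m0 ?m2; ring.
exists (M 0 0, M 1 0), (1, M 0 1 / M 0 0); apply/matrixP; apply: ord2P; apply: ord2P;
  rewrite !mxE /=.
- ring.
- by field.
- ring.
- have d' : M 1 1 = M 0 1 * M 1 0 / M 0 0 by rewrite -d; field.
  by rewrite d'; field.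
Qed.

Lemma par_lem (a b c : F * F) : w a b = 0 -> w a c != 0 -> exists l, b = sc2 l a.
Proof.
case: a b c => [a1 a2] [b1 b2] [c1 c2]; rewrite /w /sc2 /= => H Hc.
have [z1|z1] := eqVneq a1 0.
  have z2 : a2 != 0 by apply/eqP => e2; move: Hc; rewrite z1 e2 !mul0r subrr eqxx.
  have eb : b1 = 0 by apply: (mulfI z2); move: H; rewrite z1 mulr0 mul0r add0r => /eqP; rewrite oppr_eq0 => /eqP ->.
  exists (b2 / a2); congr pair; [rewrite eb z1; ring | by field].
exists (b1 / a1); congr pair; first by field.
apply: (mulfI z1); rewrite (_ : a1 * (b1 / a1 * a2) = b1 * a2); last by field.
apply/eqP; rewrite -subr_eq0; apply/eqP; rewrite -H; ring.
Qed.

Lemma nz1 (x y : F) : x * y = 1 -> x != 0 /\ y != 0.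
Proof.
move=> e; split; apply/eqP => z; move: e; rewrite z ?mul0r ?mulr0 => /eqP; by rewrite eq_sym oner_eq0.
Qed.

Lemma nzm (x y : F) : x * y = -1 -> x != 0 /\ y != 0.
Proof.
move=> e; have [] := @nz1 x (- y); first by rewrite mulrN e opprK.
by rewrite oppr_eq0 => ? ?; split.
Qed.

Lemma nzp (x y : F) : x * y != 0 -> x != 0 /\ y != 0.
Proof. by rewrite mulf_eq0 negb_or => /andP. Qed.

Lemma z_r (x y : F) : x * y = 0 -> x != 0 -> y = 0.
Proof. by move=> /eqP; rewrite mulf_eq0 => /orP [/eqP -> /eqP //| /eqP]. Qed.

Lemma core1 (a00 a01 a10 a11 p00 p01 p10 p11 : F * F) :
  w a00 a11 * w p00 p11 = 1 ->
  w a01 a10 * w p01 p10 = -1 ->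
  w a00 a10 * w p00 p10 = 0 ->
  w a01 a11 * w p01 p11 = 0 ->
  w a10 a11 * w p10 p11 = 0 ->
  w a00 a01 = 0 ->
  exists u0 u1 v0 v1, [/\ mx2 a00 p00 = mx2 u0 v0, mx2 a01 p01 = mx2 u0 v1,
                          mx2 a10 p10 = mx2 u1 v0 & mx2 a11 p11 = mx2 u1 v1].
Proof.
move=> E1 E2 E4 E5 E6 H.
have [nA nP] := nz1 E1.
have [nA2 nP2] := nzm E2.
have [l e01] := par_lem H nA; subst a01.
have e2' : l * (w a00 a10 * w p01 p10) = -1 by rewrite -E2 /w /sc2 /=; ring.
have [nl /nzp [na nq]] := nzm e2'.
have E4' := z_r E4 na.
have [m e10] := par_lem E4' nP; subst p10.
have e5' : w p01 p11 = 0.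
  apply: (z_r (x := l * w a00 a11)); last by rewrite mulf_neq0.
  by rewrite -E5 /w /sc2 /=; ring.
have [n e11] := par_lem e5' nq; subst p11.
have e1' : n * (w a00 a11 * w p00 p01) = 1 by rewrite -E1 /w /sc2 /=; ring.
have [nn /nzp [_ npp]] := nz1 e1'.
have nm : m != 0.
  apply/eqP => z; move: nq; rewrite /w /sc2 /= z !(mul0r, mulr0) subrr eqxx; by [].
have e6' : w a10 a11 = 0.
  apply: (z_r (x := m * n * w p00 p01)); last by rewrite mulf_neq0 ?mulf_neq0.
  by rewrite -E6 /w /sc2 /=; ring.
have na' : w a10 a00 != 0 by move: na; rewrite /w -oppr_eq0; apply: contra_neq => <-; ring.
have [k e11] := par_lem e6' na'; subst a11.
set X := w a00 a10 * w p00 p01.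
have eA : k * n * X = 1 by rewrite -E1 /X /w /sc2 /=; ring.
have eB : l * m * X = 1 by rewrite -(opprK 1) -E2 /X /w /sc2 /=; ring.
have kn : k * n = l * m by rewrite -[k * n]mulr1 -eB mulrCA (mulrC (l * m)) mulrA eA mul1r.
exists a00, (sc2 m a10), p00, (sc2 l p01); split => //.
- by rewrite mx2_scale_l mx2_scale_r.
- by rewrite mx2_scale_l mx2_scale_r.
- by rewrite !mx2_scale kn mulrC.
Qed.

End S4.

Arguments det22 {_}.

Section S5.
Variable F : fieldType.
Hypothesis h2 : (2%:R : F) != 0.

Lemma bV_delta (i j k l : 'I_2) :
  bV (delta_mx i j : 'M[F]_2) (delta_mx k l) = fW F i k * fW F j l.
Proof.
move: i j k l; apply: ord2P; apply: ord2P; apply: ord2P; apply: ord2P;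
  rewrite /bV !sum2 !mxE /fW /=; ring.
Qed.

Lemma mx2_trE (a p u v : F * F) : mx2 p a = mx2 u v -> mx2 a p = mx2 v u.
Proof. by move=> h; rewrite -mx2_tr h mx2_tr. Qed.

Lemma decomp (g : 'M[F]_2 -> 'M[F]_2) : is_orthV g ->
  exists A B : 'M[F]_2, \det A * \det B = 1 /\
    ((forall M, g M = A *m M *m B^T) \/ (forall M, g M = A *m M^T *m B^T)).
Proof.
case=> lin _ pres.
have g0 : g 0 = 0.
  have e := lin 1 0 0; rewrite !scale1r addr0 in e.
  by apply: (addrI (g 0)); rewrite addr0 -e.
have gZ c M : g (c *: M) = c *: g M.
  by have := lin c M 0; rewrite !addr0 g0 addr0; apply.
have gD M N : g (M + N) = g M + g N by have := lin 1 M N; rewrite !scale1r => ->.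
pose E (i j : 'I_2) : 'M[F]_2 := delta_mx i j.
have gexp M : g M = M 0 0 *: g (E 0 0) + M 0 1 *: g (E 0 1) + M 1 0 *: g (E 1 0)
                    + M 1 1 *: g (E 1 1).
  rewrite -!gZ -!gD; congr g; apply/matrixP; apply: ord2P; apply: ord2P;
    rewrite /E !mxE /=; ring.
have key i j k l : bV (g (E i j)) (g (E k l)) = fW F i k * fW F j l.
  by rewrite pres bV_delta.
have rk i j : exists a p, g (E i j) = mx2 a p.
  apply: rank1 => //; rewrite key; move: i j; apply: ord2P; apply: ord2P; rewrite /fW /=; ring.
have [a00 [p00 e00]] := rk 0 0.
have [a01 [p01 e01]] := rk 0 1.
have [a10 [p10 e10]] := rk 1 0.
have [a11 [p11 e11]] := rk 1 1.
have E1 : w a00 a11 * w p00 p11 = 1.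
  by rewrite -bV_mx2 -e00 -e11 key /fW /= mulr1.
have E2 : w a01 a10 * w p01 p10 = -1.
  by rewrite -bV_mx2 -e01 -e10 key /fW /= mulrN1.
have E3 : w a00 a01 * w p00 p01 = 0.
  by rewrite -bV_mx2 -e00 -e01 key /fW /= mul0r.
have E4 : w a00 a10 * w p00 p10 = 0.
  by rewrite -bV_mx2 -e00 -e10 key /fW /= mulr0.
have E5 : w a01 a11 * w p01 p11 = 0.
  by rewrite -bV_mx2 -e01 -e11 key /fW /= mulr0.
have E6 : w a10 a11 * w p10 p11 = 0.
  by rewrite -bV_mx2 -e10 -e11 key /fW /= mul0r.
move/eqP: E3; rewrite mulf_eq0 => /orP [/eqP H|/eqP H].
  have [u0 [u1 [v0 [v1 [h00 h01 h10 h11]]]]] := core1 E1 E2 E4 E5 E6 H.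
  exists (colmx u0 u1), (colmx v0 v1); split.
    by rewrite !det_colmx -bV_mx2 -h00 -h11 -e00 -e11 key /fW /= mulr1.
  left => M; rewrite gexp e00 e01 e10 e11 h00 h01 h10 h11.
  apply/matrixP; apply: ord2P; apply: ord2P; do 3 rewrite ?sum2 ?mxE /=; ring.
have E1' : w p00 p11 * w a00 a11 = 1 by rewrite mulrC.
have E2' : w p01 p10 * w a01 a10 = -1 by rewrite mulrC.
have E4' : w p00 p10 * w a00 a10 = 0 by rewrite mulrC.
have E5' : w p01 p11 * w a01 a11 = 0 by rewrite mulrC.
have E6' : w p10 p11 * w a10 a11 = 0 by rewrite mulrC.
have [u0 [u1 [v0 [v1 [h00 h01 h10 h11]]]]] := core1 E1' E2' E4' E5' E6' H.
move/mx2_trE: h00 => h00; move/mx2_trE: h01 => h01.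
move/mx2_trE: h10 => h10; move/mx2_trE: h11 => h11.
exists (colmx v0 v1), (colmx u0 u1); split.
  by rewrite !det_colmx -bV_mx2 -h00 -h11 -e00 -e11 key /fW /= mulr1.
right => M; rewrite gexp e00 e01 e10 e11 h00 h01 h10 h11.
apply/matrixP; apply: ord2P; apply: ord2P; do 3 rewrite ?sum2 ?mxE /=; ring.
Qed.

Lemma rescale (hsq : forall a : F, exists b : F, b * b = a) (A B : 'M[F]_2) :
  \det A * \det B = 1 -> exists A' B' : 'M[F]_2,
    [/\ \det A' = 1, \det B' = 1 & forall X, A' *m X *m B'^T = A *m X *m B^T].
Proof.
move=> d; have [s hs] := hsq (\det B).
have [_ nB] := nz1 d.
have ns : s != 0 by apply/eqP => z; move: nB; rewrite -hs z mul0r eqxx.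
have dS c (C : 'M[F]_2) : \det (c *: C) = c * c * \det C by rewrite !det22 !mxE; ring.
exists (s *: A), (s^-1 *: B); split.
- by rewrite dS hs mulrC d.
- by rewrite dS -hs; field.
- move=> X; apply/matrixP; apply: ord2P; apply: ord2P; do 3 rewrite ?sum2 ?mxE /=; field; exact: ns.
Qed.

End S5.

Arguments mulK_E {_}. Arguments K10_eq {_}. Arguments mulE {_}. Arguments scE {_}.

Section S6.
Variable F : fieldType.
Hypothesis h2 : (2%:R : F) != 0.

Lemma h4 : (4%:R : F) != 0.
Proof. by rewrite (_ : 4%:R = 2%:R * 2%:R :> F) ?mulf_neq0 // -natrM. Qed.

Definition oneK : K10 F := mkK10 1 0.
Definition zK : K10 F := mkK10 0 0.
Definition bas (i j : 'I_3) : K10 F := mkK10 0 (delta_mx i j).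
Definition oddmk (a b c d : F) : K10 F := mkK10 0 (\matrix_(i < 3, j < 3)
  match nat_of_ord i, nat_of_ord j with
  | 0, 1 => a | 0, 2 => b | 1, 0 => c | 2, 0 => d | _, _ => 0 end).

Ltac kc := rewrite ?mulK_E; apply: K10_eq => /=;
  [ rewrite ?mulK_E /= ?/scE /= ?mxE /=
  | apply/matrixP; apply: ord3P; apply: ord3P; rewrite ?mulK_E /= ?/mulE /= ?mxE /= ?mxE /= ].

Lemma oddE (D : K10 F) : oddK D -> D = oddmk (tn D i0 i1) (tn D i0 i2) (tn D i1 i0) (tn D i2 i0).
Proof.
case=> H0 H; kc => //; rewrite ?H //.
Qed.

Lemma mul1K u : mulK oneK u = u.
Proof. kc; ring. Qed.
Lemma mulK1 u : mulK u oneK = u.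
Proof. kc; ring. Qed.

Lemma embV_bas11 : bas i1 i1 = embV (delta_mx 0 0).
Proof. kc; ring. Qed.
Lemma embV_bas12 : bas i1 i2 = embV (delta_mx 0 1).
Proof. kc; ring. Qed.
Lemma embV_bas21 : bas i2 i1 = embV (delta_mx 1 0).
Proof. kc; ring. Qed.
Lemma embV_bas22 : bas i2 i2 = embV (delta_mx 1 1).
Proof. kc; ring. Qed.

Lemma bas00E : bas i0 i0 = addK (scaleK (3%:R / 4%:R) oneK) (scaleK (-1) (mulK (bas i1 i1) (bas i2 i2))).
Proof. kc; ring. Qed.

Lemma ox_xx : mulK (bas i0 i1) (bas i1 i1) = zK.
Proof. kc; ring. Qed.
Lemma ox_yx : mulK (bas i0 i1) (bas i2 i1) = zK.
Proof. kc; ring. Qed.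

Lemma xoE : bas i1 i0 = scaleK (-2%:R) (mulK (bas i0 i1) (bas i1 i2)).
Proof. kc; field; by rewrite ?h2 ?h4. Qed.
Lemma yoE : bas i2 i0 = scaleK (-2%:R) (mulK (bas i0 i1) (bas i2 i2)).
Proof. kc; field; by rewrite ?h2 ?h4. Qed.
Lemma oyE : bas i0 i2 = scaleK 2%:R (mulK (bas i1 i0) (bas i2 i2)).
Proof. kc; field; by rewrite ?h2 ?h4. Qed.


Lemma q1 a b c d : tn (mulK (oddmk a b c d) (bas i1 i1)) i1 i0 = b / 2%:R.
Proof. rewrite mulK_E /= mxE /mulE /= !mxE /=; field; by rewrite ?h2. Qed.
Lemma q2 a b c d : tn (mulK (oddmk a b c d) (bas i1 i1)) i0 i1 = - (d / 2%:R).
Proof. rewrite mulK_E /= mxE /mulE /= !mxE /=; field; by rewrite ?h2. Qed.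
Lemma q3 a b c d : tn (mulK (oddmk a b c d) (bas i2 i1)) i0 i1 = c / 2%:R.
Proof. rewrite mulK_E /= mxE /mulE /= !mxE /=; field; by rewrite ?h2. Qed.

Lemma oddmk_a a : oddmk a 0 0 0 = scaleK a (bas i0 i1).
Proof. kc; ring. Qed.

Lemma wE : mulK (bas i0 i1) (bas i0 i2) =
  addK (scaleK (- (3%:R / 4%:R * 2^-1)) oneK) (bas i0 i0).
Proof. kc; ring. Qed.

Lemma waa a : tn (mulK (scaleK a (bas i0 i1)) (scaleK a (bas i0 i2))) i0 i0 = a * a.
Proof. rewrite mulK_E /= mxE /mulE /= !mxE /=; ring. Qed.

Lemma pxoE a : scaleK (-2%:R) (mulK (scaleK a (bas i0 i1)) (bas i1 i2)) = scaleK a (bas i1 i0).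
Proof. kc; field; by rewrite ?h2 ?h4. Qed.
Lemma pyoE a : scaleK (-2%:R) (mulK (scaleK a (bas i0 i1)) (bas i2 i2)) = scaleK a (bas i2 i0).
Proof. kc; field; by rewrite ?h2 ?h4. Qed.
Lemma poyE a : scaleK 2%:R (mulK (scaleK a (bas i1 i0)) (bas i2 i2)) = scaleK a (bas i0 i2).
Proof. kc; field; by rewrite ?h2 ?h4. Qed.

Lemma addK0 (u : K10 F) : addK u zK = u.
Proof. by apply: K10_eq => /=; rewrite addr0. Qed.
Lemma scale1K (u : K10 F) : scaleK 1 u = u.
Proof. by apply: K10_eq => /=; rewrite ?mul1r ?scale1r. Qed.

Definition comb (z : K10 F) : K10 F :=
  addK (scaleK (sc z) oneK) (addK (scaleK (tn z i0 i0) (bas i0 i0))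
  (addK (scaleK (tn z i0 i1) (bas i0 i1)) (addK (scaleK (tn z i0 i2) (bas i0 i2))
  (addK (scaleK (tn z i1 i0) (bas i1 i0)) (addK (scaleK (tn z i1 i1) (bas i1 i1))
  (addK (scaleK (tn z i1 i2) (bas i1 i2)) (addK (scaleK (tn z i2 i0) (bas i2 i0))
  (addK (scaleK (tn z i2 i1) (bas i2 i1)) (scaleK (tn z i2 i2) (bas i2 i2)))))))))).

Lemma combE z : z = comb z.
Proof. kc; ring. Qed.

Definition modK (a : F) (z : K10 F) : K10 F :=
  mkK10 (sc z) (\matrix_(i, j) (if par i != par j then a * tn z i j else tn z i j)).

Lemma modK_comb a z : modK a z = addK (scaleK (sc z) oneK) (addK (scaleK (tn z i0 i0) (bas i0 i0))
  (addK (scaleK (tn z i0 i1) (scaleK a (bas i0 i1))) (addK (scaleK (tn z i0 i2) (scaleK a (bas i0 i2)))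
  (addK (scaleK (tn z i1 i0) (scaleK a (bas i1 i0))) (addK (scaleK (tn z i1 i1) (bas i1 i1))
  (addK (scaleK (tn z i1 i2) (bas i1 i2)) (addK (scaleK (tn z i2 i0) (scaleK a (bas i2 i0)))
  (addK (scaleK (tn z i2 i1) (bas i2 i1)) (scaleK (tn z i2 i2) (bas i2 i2)))))))))).
Proof. kc; ring. Qed.

Lemma modK1 z : modK 1 z = z.
Proof. kc; ring. Qed.
Lemma modKN1 z : modK (-1) z = tauK z.
Proof. kc; ring. Qed.

Lemma odd01 : oddK (bas i0 i1).
Proof. split => //; apply: ord3P; apply: ord3P => //= _; by rewrite mxE. Qed.

Lemma kernel (phi : K10 F -> K10 F) : is_autK phi -> (forall M, phi (embV M) = embV M) ->
  (forall z, phi z = z) \/ (forall z, phi z = tauK z).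
Proof.
case=> lin [psi c1 c2] mul _ od fixV.
have p0 : phi zK = zK.
  have e := lin 1 zK zK; rewrite scale1K addK0 in e.
  apply: K10_eq => /=.
    by apply: (addrI (sc (phi zK))); rewrite addr0 [in RHS]e /= mul1r.
  by apply: (addrI (tn (phi zK))); rewrite addr0 [in RHS]e /= scale1r.
have pS c u : phi (scaleK c u) = scaleK c (phi u).
  by have := lin c u zK; rewrite !addK0 p0 addK0.
have pA u v : phi (addK u v) = addK (phi u) (phi v).
  by have := lin 1 u v; rewrite !scale1K.
have p1 : phi oneK = oneK.
  have L w : mulK (phi oneK) w = w by rewrite -(c2 w) -mul mul1K.
  by rewrite -{2}(L oneK) mulK1.
have pxx : phi (bas i1 i1) = bas i1 i1 by rewrite embV_bas11 fixV.
have pxy : phi (bas i1 i2) = bas i1 i2 by rewrite embV_bas12 fixV.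
have pyx : phi (bas i2 i1) = bas i2 i1 by rewrite embV_bas21 fixV.
have pyy : phi (bas i2 i2) = bas i2 i2 by rewrite embV_bas22 fixV.
have p00 : phi (bas i0 i0) = bas i0 i0.
  by rewrite bas00E pA !pS p1 mul pxx pyy -bas00E.
have eD := oddE (od _ odd01).
set a := tn (phi (bas i0 i1)) i0 i1 in eD.
set b := tn (phi (bas i0 i1)) i0 i2 in eD.
set c := tn (phi (bas i0 i1)) i1 i0 in eD.
set d := tn (phi (bas i0 i1)) i2 i0 in eD.
have H1 : mulK (phi (bas i0 i1)) (bas i1 i1) = zK by rewrite -pxx -mul ox_xx p0.
have H2 : mulK (phi (bas i0 i1)) (bas i2 i1) = zK by rewrite -pyx -mul ox_yx p0.
have i2n : (2%:R : F)^-1 != 0 by rewrite invr_eq0.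
have b0 : b = 0.
  have := q1 a b c d; rewrite -eD H1 /= mxE /= => /esym /eqP; rewrite mulf_eq0 (negbTE i2n) orbF.
  by move/eqP.
have d0 : d = 0.
  have := q2 a b c d; rewrite -eD H1 /= mxE /= => /esym /eqP; rewrite oppr_eq0 mulf_eq0 (negbTE i2n) orbF.
  by move/eqP.
have c0 : c = 0.
  have := q3 a b c d; rewrite -eD H2 /= mxE /= => /esym /eqP; rewrite mulf_eq0 (negbTE i2n) orbF.
  by move/eqP.
rewrite b0 c0 d0 oddmk_a in eD.
have pxo : phi (bas i1 i0) = scaleK a (bas i1 i0).
  by rewrite {1}xoE pS mul eD pxy pxoE.
have pyo : phi (bas i2 i0) = scaleK a (bas i2 i0).
  by rewrite {1}yoE pS mul eD pyy pyoE.
have poy : phi (bas i0 i2) = scaleK a (bas i0 i2).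
  by rewrite {1}oyE pS mul pxo pyy poyE.
have aa : a * a = 1.
  have e1 : phi (mulK (bas i0 i1) (bas i0 i2)) = mulK (bas i0 i1) (bas i0 i2).
    by rewrite wE pA !pS p1 p00.
  move: (congr1 (fun u => tn u i0 i0) e1); rewrite mul eD poy waa wE /= !mxE /=.
  move=> ->; ring.
have main z : phi z = modK a z.
  rewrite {1}(combE z) modK_comb !pA !pS p1 p00 eD poy pxo pxx pxy pyo pyx pyy.
  by [].
have : (a - 1) * (a + 1) == 0 by rewrite (_ : (a - 1) * (a + 1) = a * a - 1); [rewrite aa subrr | ring].
rewrite mulf_eq0 => /orP [/eqP e|/eqP e].
  left => z; rewrite main (_ : a = 1) ?modK1 //.
  by apply/eqP; rewrite -subr_eq0 e.
right => z; rewrite main (_ : a = -1) ?modKN1 //.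
by apply/eqP; rewrite -addr_eq0 e.
Qed.

End S6.

Arguments det22 {_}. Arguments mapK {_}.

Lemma det_opp2 (F : fieldType) (A : 'M[F]_2) : \det (- A) = \det A.
Proof. rewrite !det22 !mxE; ring. Qed.

Unset Implicit Arguments.

Theorem lemma3p2 (F : fieldType)
  (h2 : (2%:R : F) != 0) (h3 : (3%:R : F) != 0)
  (hsq : forall a : F, exists b : F, b * b = a) :
  (* Psi is surjective *)
  (forall g : 'M[F]_2 -> 'M[F]_2, is_orthV g ->
     exists phi : K10 F -> K10 F, is_autK phi /\
       forall M, phi (embV M) = embV (g M)) /\
  (* ker Psi = {id, tau} *)
  is_autK (@tauK F) /\
  (forall phi : K10 F -> K10 F, is_autK phi ->
     ((forall M, phi (embV M) = embV M) <->
      ((forall z, phi z = z) \/ (forall z, phi z = tauK z)))).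
Proof.
split.
  move=> g og.
  have [A [B [dAB form]]] := @decomp F h2 g og.
  have [A' [B' [dA' dB' eX]]] := @rescale F hsq A B dAB.
  case: form => fm.
    exists (mapK A' B'); split; first exact: mapK_aut.
    by move=> M; rewrite mapK_embV eX fm.
  exists (mapK (- A') B' \o @Sw F); split.
    apply: aut_comp; last exact: Sw_aut.
    by apply: mapK_aut; rewrite ?det_opp2.
  by move=> M /=; rewrite Sw_embV mapK_embV mulNmx mulmxN opprK eX fm.
split; first exact: tau_aut.
move=> phi aphi; split; first exact: (@kernel F h2 phi aphi).
by case=> H M; rewrite H // tau_embV.
Qed.
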